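(* Every positive definite matrix in $\mathcal{M}_k\otimes\mathcal{M}_m$ belongs to $CR_{k,m}$. Moreover, $CR_{k,m}$ is a convex cone (i.e., $\lambda\gamma\in CR_{k,m}$ and $\gamma+\delta\in CR_{k,m}$ for all $\gamma,\delta\in CR_{k,m}$, $\lambda>0$), it is dense in the set of all states of $\mathcal{M}_k\otimes\mathcal{M}_m$, and it is not closed.
   Context: $\mathcal{M}_k$ denotes the complex $k\times k$ matrices, and $\mathcal{M}_k\otimes\mathcal{M}_m$ is identified with $\mathcal{M}_{km}$ via the Kronecker product. A state is a positive semidefinite Hermitian matrix (not necessarily of trace one). For $\gamma=\sum_{i=1}^nA_i\otimes B_i\in\mathcal{M}_k\otimes\mathcal{M}_m$ define $G_\gamma:\mathcal{M}_k\to\mathcal{M}_m$, $G_\gamma(X)=\sum_i\mathrm{tr}(A_iX)B_i$, and $F_\gamma:\mathcal{M}_m\to\mathcal{M}_k$, $F_\gamma(Y)=\sum_i\mathrm{tr}(B_iY)A_i$. A linear map is positive if it maps positive semidefinite matrices to positive semidefinite matrices, and self-adjoint if self-adjoint with respect to $\langle X,Y\rangle=\mathrm{tr}(XY^* )$. For orthogonal projections $V,W$, $V\mathcal{M}_kW=\{VXW:X\in\mathcal{M}_k\}$. Given an orthogonal projection $V\in\mathcal{M}_k$ and a positive map $T:V\mathcal{M}_kV\to V\mathcal{M}_kV$, $T$ is irreducible if the only orthogonal projections $W$ with $W\mathcal{M}_kW\subseteq V\mathcal{M}_kV$ and $T(W\mathcal{M}_kW)\subseteq W\mathcal{M}_kW$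 are $W=0$ and $W=V$. A self-adjoint positive map $T:\mathcal{M}_k\to\mathcal{M}_k$ is completely reducible if there are orthogonal projections $W_1,\dots,W_l$ with $W_iW_j=0$ for $i\ne j$, $T(W_i\mathcal{M}_kW_i)\subseteq W_i\mathcal{M}_kW_i$ and $T|_{W_i\mathcal{M}_kW_i}$ irreducible for every $i$, and $T|_R\equiv0$, where $R$ is the orthogonal complement (trace inner product) of $\bigoplus_iW_i\mathcal{M}_kW_i$ in $\mathcal{M}_k$. $CR_{k,m}$ is the set of states $\gamma\in\mathcal{M}_k\otimes\mathcal{M}_m$ such that $F_\gamma\circ G_\gamma:\mathcal{M}_k\to\mathcal{M}_k$ is completely reducible. *)

(* Defs.v *)
From HB Require Import structures.
From mathcomp Require Import all_boot all_order all_algebra.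
From mathcomp Require Import complex mxtens.
From mathcomp Require Import reals.
Set Implicit Arguments. Unset Strict Implicit. Unset Printing Implicit Defensive.
Import Order.TTheory GRing.Theory Num.Theory.
Local Open Scope ring_scope.

Section Defs.
Variable (R : realType).
Local Notation C := R[i].

Definition adjmx {p q : nat} (A : 'M[C]_(p, q)) : 'M[C]_(q, p) :=
  map_mx (fun z => z^*) A^T.

Definition hermitian {n : nat} (A : 'M[C]_n) : Prop := adjmx A = A.

Definition psd {n : nat} (A : 'M[C]_n) : Prop :=
  hermitian A /\ forall v : 'cV[C]_n, 0 <= (adjmx v *m A *m v) 0 0.

Definition posdef {n : nat} (A : 'M[C]_n) : Prop :=
  hermitian A /\ forall v : 'cV[C]_n, v != 0 -> 0 < (adjmx v *m A *m v) 0 0.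

(* states of M_k (x) M_m, identified with M_{km} via the Kronecker product tensmx *)
Definition state (k m : nat) (g : 'M[C]_(k * m)) : Prop := psd g.

(* G and F attached to a decomposition gamma = sum_i A_i (x) B_i *)
Definition Gdec {k m : nat} (s : seq ('M[C]_k * 'M[C]_m)) (X : 'M[C]_k) : 'M[C]_m :=
  \sum_(p <- s) (\tr (p.1 *m X)) *: p.2.
Definition Fdec {k m : nat} (s : seq ('M[C]_k * 'M[C]_m)) (Y : 'M[C]_m) : 'M[C]_k :=
  \sum_(p <- s) (\tr (p.2 *m Y)) *: p.1.

(* the canonical decomposition gamma = sum g_{(a,b),(a',b')} E_{aa'} (x) E_{bb'} *)
Definition std_dec (k m : nat) (g : 'M[C]_(k * m)) : seq ('M[C]_k * 'M[C]_m) :=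
  [seq (g (mxtens_index (x.1.1, x.2.1)) (mxtens_index (x.1.2, x.2.2))
          *: delta_mx x.1.1 x.1.2, delta_mx x.2.1 x.2.2)
  | x <- enum {: ('I_k * 'I_k) * ('I_m * 'I_m)}].

Definition G_ (k m : nat) (g : 'M[C]_(k * m)) : 'M[C]_k -> 'M[C]_m := Gdec (std_dec g).
Definition F_ (k m : nat) (g : 'M[C]_(k * m)) : 'M[C]_m -> 'M[C]_k := Fdec (std_dec g).

Definition positive_map {k : nat} (T : 'M[C]_k -> 'M[C]_k) : Prop :=
  forall X, psd X -> psd (T X).
Definition selfadjoint_map {k : nat} (T : 'M[C]_k -> 'M[C]_k) : Prop :=
  forall X Y, \tr (T X *m adjmx Y) = \tr (X *m adjmx (T Y)).

Definition orth_proj {k : nat} (W : 'M[C]_k) : Prop := W *m W = W /\ adjmx W = W.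

(* T restricted to V M_k V is irreducible (T leaves V M_k V invariant) *)
Definition irreducible_on {k : nat} (T : 'M[C]_k -> 'M[C]_k) (V : 'M[C]_k) : Prop :=
  forall W : 'M[C]_k, orth_proj W ->
    (forall X, exists Y, W *m X *m W = V *m Y *m V) ->
    (forall X, exists Y, T (W *m X *m W) = W *m Y *m W) ->
    W = 0 \/ W = V.

Definition completely_reducible {k : nat} (T : 'M[C]_k -> 'M[C]_k) : Prop :=
  selfadjoint_map T /\ positive_map T /\
  exists (l : nat) (W : 'I_l -> 'M[C]_k),
    (forall i, orth_proj (W i)) /\
    (forall i j, i != j -> W i *m W j = 0) /\
    (forall i X, exists Y, T (W i *m X *m W i) = W i *m Y *m W i) /\
    (forall i, irreducible_on T (W i)) /\
    (* T vanishes on the orthogonal complement R of (+)_i W_i M_k W_i *)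
    (forall X, (forall Z : 'I_l -> 'M[C]_k,
                  \tr (X *m adjmx (\sum_i W i *m Z i *m W i)) = 0) -> T X = 0).

Definition CR (k m : nat) (g : 'M[C]_(k * m)) : Prop :=
  state g /\ completely_reducible (F_ g \o G_ g).

End Defs.

(* Main.v *)
Require Import Defs.
From HB Require Import structures.
From mathcomp Require Import all_boot all_order all_algebra.
From mathcomp Require Import complex mxtens reals.
Import Order.TTheory GRing.Theory Num.Theory.
Local Open Scope ring_scope.
From mathcomp Require Import ring spectral.
From Stdlib Require Import Classical FunctionalExtensionality.
Set Implicit Arguments. Unset Strict Implicit. Unset Printing Implicit Defensive.

Section Basic.
Variable R : realType.
Local Notation C := R[i].

Lemma adjE p q (A : 'M[C]_(p,q)) i j : adjmx A i j = (A j i)^*.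
Proof. by rewrite /adjmx !mxE. Qed.

Lemma adjK p q (A : 'M[C]_(p,q)) : adjmx (adjmx A) = A.
Proof. by apply/matrixP => i j; rewrite !adjE conjCK. Qed.

Lemma adjM p q r (A : 'M[C]_(p,q)) (B : 'M[C]_(q,r)) :
  adjmx (A *m B) = adjmx B *m adjmx A.
Proof.
apply/matrixP => i j; rewrite adjE !mxE rmorph_sum; apply: eq_bigr => l _.
by rewrite rmorphM !adjE mulrC.
Qed.

Lemma adjD p q (A B : 'M[C]_(p,q)) : adjmx (A + B) = adjmx A + adjmx B.
Proof. by apply/matrixP => i j; rewrite [LHS]adjE [RHS]mxE !adjE mxE rmorphD. Qed.

Lemma adjN p q (A : 'M[C]_(p,q)) : adjmx (- A) = - adjmx A.
Proof. by apply/matrixP => i j; rewrite [LHS]adjE [RHS]mxE !adjE mxE rmorphN. Qed.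

Lemma adjB p q (A B : 'M[C]_(p,q)) : adjmx (A - B) = adjmx A - adjmx B.
Proof. by rewrite adjD adjN. Qed.

Lemma adjZ p q c (A : 'M[C]_(p,q)) : adjmx (c *: A) = c^* *: adjmx A.
Proof. by apply/matrixP => i j; rewrite [LHS]adjE [RHS]mxE !adjE mxE rmorphM. Qed.

Lemma adj0 p q : adjmx (0 : 'M[C]_(p,q)) = 0.
Proof. by apply/matrixP => i j; rewrite adjE !mxE rmorph0. Qed.

Lemma adj1 p : adjmx (1%:M : 'M[C]_p) = 1%:M.
Proof.
by apply/matrixP => i j; rewrite adjE !mxE rmorph_nat eq_sym.
Qed.

Lemma adj_sum p q I (r : seq I) (P : pred I) (F : I -> 'M[C]_(p,q)) :
  adjmx (\sum_(i <- r | P i) F i) = \sum_(i <- r | P i) adjmx (F i).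
Proof.
apply/matrixP => a b; rewrite adjE !summxE rmorph_sum.
by apply: eq_bigr => i _; rewrite adjE.
Qed.

Lemma tr_sum p I (r : seq I) (P : pred I) (F : I -> 'M[C]_p) :
  \tr (\sum_(i <- r | P i) F i) = \sum_(i <- r | P i) \tr (F i).
Proof. exact: raddf_sum. Qed.

Lemma trAA p q (A : 'M[C]_(p,q)) :
  \tr (A *m adjmx A) = \sum_i \sum_j A i j * (A i j)^*.
Proof.
rewrite /mxtrace; apply: eq_bigr => i _; rewrite mxE; apply: eq_bigr => j _.
by rewrite adjE.
Qed.

Lemma trAA_ge0 p q (A : 'M[C]_(p,q)) : 0 <= \tr (A *m adjmx A).
Proof.
rewrite trAA; apply: sumr_ge0 => i _; apply: sumr_ge0 => j _.
exact: mul_conjC_ge0.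
Qed.

Lemma trAA_eq0 p q (A : 'M[C]_(p,q)) : \tr (A *m adjmx A) = 0 -> A = 0.
Proof.
rewrite trAA => /eqP; rewrite psumr_eq0; last first.
  by move=> i _; apply: sumr_ge0 => j _; exact: mul_conjC_ge0.
move=> /allP H; apply/matrixP => i j; rewrite mxE.
have /(_ (mem_index_enum i)) := H i; rewrite implyTb psumr_eq0; last first.
  by move=> l _; exact: mul_conjC_ge0.
by move=> /allP /(_ j (mem_index_enum j)); rewrite mul_conjC_eq0 => /eqP.
Qed.

Lemma trsum_eq0 p q (I : finType) (F : I -> 'M[C]_(p,q)) :
  \tr (\sum_i F i *m adjmx (F i)) = 0 -> forall i, F i = 0.
Proof.
rewrite raddf_sum => /eqP; rewrite psumr_eq0; last by move=> i _; exact: trAA_ge0.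
move=> /allP H i; have := H i (mem_index_enum i).
rewrite implyTb => /eqP; exact: trAA_eq0.
Qed.

Lemma trsum2_eq0 p q (I J : finType) (F : I -> J -> 'M[C]_(p,q)) :
  \tr (\sum_i \sum_j F i j *m adjmx (F i j)) = 0 -> forall i j, F i j = 0.
Proof.
rewrite (pair_big xpredT xpredT (fun i j => F i j *m adjmx (F i j))) /=.
move=> H0 i j; exact: (@trsum_eq0 _ _ _ (fun p : I * J => F p.1 p.2) H0 (i, j)).
Qed.

Definition vnorm p (u : 'cV[C]_p) := (adjmx u *m u) 0 0.

Lemma vnormE p (u : 'cV[C]_p) : vnorm u = \tr (adjmx u *m adjmx (adjmx u)).
Proof. by rewrite /vnorm adjK trace_mx11. Qed.

Lemma vnorm_ge0 p (u : 'cV[C]_p) : 0 <= vnorm u.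
Proof. by rewrite vnormE trAA_ge0. Qed.

Lemma vnorm_conj p (u : 'cV[C]_p) : (vnorm u)^* = vnorm u.
Proof. exact: geC0_conj (vnorm_ge0 u). Qed.

Lemma vnorm_eq0 p (u : 'cV[C]_p) : vnorm u = 0 -> u = 0.
Proof.
by rewrite vnormE => /trAA_eq0 /(congr1 (@adjmx _ _ _)); rewrite adjK adj0.
Qed.

Definition rk1 p (u : 'cV[C]_p) := (vnorm u)^-1 *: (u *m adjmx u).

Lemma rk1_proj p (u : 'cV[C]_p) : u != 0 -> orth_proj (rk1 u).
Proof.
move=> nu; have nz : vnorm u != 0 by apply/eqP => /vnorm_eq0 /eqP; rewrite (negbTE nu).
split.
  rewrite /rk1 -scalemxAl -scalemxAr scalerA mulmxA -(mulmxA u).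
  have -> : adjmx u *m u = (vnorm u)%:M.
    by apply/matrixP => i j; rewrite !ord1 [RHS]mxE eqxx mulr1n.
  by rewrite mul_mx_scalar -scalemxAl scalerA mulrAC mulVf // mul1r.
by rewrite /rk1 adjZ adjM adjK geC0_conj // invr_ge0 vnorm_ge0.
Qed.

Lemma rk1_u p (u : 'cV[C]_p) : u != 0 -> rk1 u *m u = u.
Proof.
move=> nu; have nz : vnorm u != 0 by apply/eqP => /vnorm_eq0 /eqP; rewrite (negbTE nu).
rewrite /rk1 -scalemxAl -mulmxA.
have -> : adjmx u *m u = (vnorm u)%:M.
  by apply/matrixP => i j; rewrite !ord1 [RHS]mxE eqxx mulr1n.
by rewrite mul_mx_scalar scalerA mulVf // scale1r.
Qed.

Lemma col_neq0 p q (A : 'M[C]_(p,q)) : A != 0 -> exists j, col j A != 0.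
Proof.
move=> nA; apply/existsP; apply: contraR nA => /existsPn H; apply/eqP/matrixP => i j.
by have /negPn/eqP/matrixP/(_ i 0) := H j; rewrite !mxE.
Qed.

Lemma R_decomp k l (W : 'I_l -> 'M[C]_k) :
  (forall i, orth_proj (W i)) -> (forall i j, i != j -> W i *m W j = 0) ->
  forall X (Z : 'I_l -> 'M[C]_k),
  \tr ((X - \sum_i W i *m X *m W i) *m adjmx (\sum_i W i *m Z i *m W i)) = 0.
Proof.
move=> pW oW X Z; rewrite mulmxBl raddfB /= mulmx_suml tr_sum; apply/eqP; rewrite subr_eq0; apply/eqP.
rewrite adj_sum mulmx_sumr tr_sum; apply: eq_bigr => i _.
rewrite mulmx_sumr tr_sum (bigD1 i) //= big1 ?addr0; last first.
  move=> j ji; rewrite !adjM !(pW j).2 -!mulmxA (mulmxA (W i) (W j)) oW ?mul0mx ?mulmx0 ?mxtrace0 //.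
  by rewrite eq_sym.
have WW : forall A : 'M_k, A *m W i *m W i = A *m W i by move=> A; rewrite -mulmxA (pW i).1.
by rewrite !adjM !(pW i).2 -!mulmxA [RHS]mxtrace_mulC !mulmxA !WW.
Qed.

Lemma R_D k l (W : 'I_l -> 'M[C]_k) :
  (forall i, orth_proj (W i)) -> (forall i j, i != j -> W i *m W j = 0) ->
  forall i V (Z : 'I_l -> 'M[C]_k),
  \tr (((1%:M - W i) *m V *m W i) *m adjmx (\sum_j W j *m Z j *m W j)) = 0.
Proof.
move=> pW oW i V Z; rewrite adj_sum mulmx_sumr tr_sum big1 // => j _.
rewrite !adjM !(pW j).2.
case: (eqVneq i j) => [<-|ij]; last first.
  by rewrite -!mulmxA (mulmxA (W i) (W j)) oW // !mul0mx !mulmx0 mxtrace0.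
rewrite -!mulmxA mxtrace_mulC -!mulmxA.
suff -> : W i *m (1%:M - W i) = 0 by rewrite !mulmx0 mxtrace0.
by rewrite mulmxBr mulmx1 (pW i).1 subrr.
Qed.

End Basic.

Section Family.
Variable R : realType.
Local Notation C := R[i].
Variables (k m n : nat) (Cf : 'I_n -> 'M[C]_(m,k)).

Definition Hf (X : 'M[C]_k) : 'M[C]_m := \sum_j Cf j *m X *m adjmx (Cf j).
Definition Tf (X : 'M[C]_k) : 'M[C]_k := \sum_i adjmx (Cf i) *m Hf X *m Cf i.
Definition Lf i j := locked (adjmx (Cf i) *m Cf j).
Lemma LfE i j : Lf i j = adjmx (Cf i) *m Cf j.
Proof. by rewrite /Lf -lock. Qed.

Lemma adjL i j : adjmx (Lf i j) = Lf j i.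
Proof. by rewrite !LfE adjM adjK. Qed.

Lemma TfE X : Tf X = \sum_i \sum_j Lf i j *m X *m adjmx (Lf i j).
Proof.
rewrite /Tf; apply: eq_bigr => i _; rewrite /Hf mulmx_sumr mulmx_suml.
by apply: eq_bigr => j _; rewrite adjL !LfE !mulmxA.
Qed.

Lemma HfD X Y : Hf (X + Y) = Hf X + Hf Y.
Proof. by rewrite /Hf -big_split; apply: eq_bigr => j _; rewrite mulmxDr mulmxDl. Qed.
Lemma HfZ c X : Hf (c *: X) = c *: Hf X.
Proof. by rewrite /Hf scaler_sumr; apply: eq_bigr => j _; rewrite scalemxAl scalemxAr. Qed.
Lemma Hf0 : Hf 0 = 0.
Proof. by rewrite /Hf big1 // => j _; rewrite mulmx0 mul0mx. Qed.
Lemma HfN X : Hf (- X) = - Hf X.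
Proof. by rewrite -scaleN1r HfZ scaleN1r. Qed.
Lemma HfB X Y : Hf (X - Y) = Hf X - Hf Y.
Proof. by rewrite HfD HfN. Qed.

Lemma TfD X Y : Tf (X + Y) = Tf X + Tf Y.
Proof. by rewrite /Tf -big_split; apply: eq_bigr => j _; rewrite HfD mulmxDr mulmxDl. Qed.
Lemma TfZ c X : Tf (c *: X) = c *: Tf X.
Proof. by rewrite /Tf scaler_sumr; apply: eq_bigr => j _; rewrite HfZ scalemxAl scalemxAr. Qed.
Lemma Tf0 : Tf 0 = 0.
Proof. by rewrite TfE big1 // => i _; rewrite big1 // => j _; rewrite mulmx0 mul0mx. Qed.
Lemma TfN X : Tf (- X) = - Tf X.
Proof. by rewrite -scaleN1r TfZ scaleN1r. Qed.
Lemma TfB X Y : Tf (X - Y) = Tf X - Tf Y.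
Proof. by rewrite TfD TfN. Qed.
Lemma Tf_sum (I : finType) (F : I -> 'M[C]_k) : Tf (\sum_i F i) = \sum_i Tf (F i).
Proof.
exact: (big_morph Tf TfD Tf0).
Qed.

Definition comm (V : 'M[C]_k) := forall i j, Lf i j *m V = V *m Lf i j.

Lemma Tf_commL A X : comm A -> Tf (A *m X) = A *m Tf X.
Proof.
move=> cA; rewrite !TfE mulmx_sumr; apply: eq_bigr => i _.
rewrite mulmx_sumr; apply: eq_bigr => j _; by rewrite !mulmxA (cA i j).
Qed.

Lemma Tf_commR B X : comm B -> Tf (X *m B) = Tf X *m B.
Proof.
move=> cB; rewrite !TfE mulmx_suml; apply: eq_bigr => i _.
rewrite mulmx_suml; apply: eq_bigr => j _; by rewrite adjL -!mulmxA (cB j i).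
Qed.

Definition inv (T : 'M[C]_k -> 'M[C]_k) (V : 'M[C]_k) :=
  forall X, exists Y, T (V *m X *m V) = V *m Y *m V.

Lemma comm_inv V : comm V -> inv Tf V.
Proof. by move=> cV X; exists (Tf X); rewrite Tf_commR // Tf_commL. Qed.

Lemma inv_comm V : orth_proj V -> inv Tf V -> comm V.
Proof.
move=> [VV aV] iV.
set U := 1%:M - V.
have aU : adjmx U = U by rewrite /U adjB adj1 aV.
have UV : U *m V = 0 by rewrite /U mulmxBl mul1mx VV subrr.
have VU : V *m U = 0 by rewrite /U mulmxBr mulmx1 VV subrr.
have eqU : V + U = 1%:M by rewrite /U addrC subrK.
clearbody U.
have [Y HY] := iV 1%:M.
have H0 : U *m Tf V *m U = 0.
  by rewrite -{1}VV -{1}[V]mulmx1 HY !mulmxA UV !mul0mx.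
have H1 : forall i j, U *m Lf i j *m V = 0.
  apply: trsum2_eq0.
  suff -> : \sum_i \sum_j (U *m Lf i j *m V) *m adjmx (U *m Lf i j *m V) = U *m Tf V *m U.
    by rewrite H0 mxtrace0.
  rewrite TfE mulmx_sumr mulmx_suml.
  apply: eq_bigr => i _; rewrite mulmx_sumr mulmx_suml; apply: eq_bigr => j _.
  rewrite !adjM aU aV -!mulmxA; congr (_ *m _); congr (_ *m _).
  by rewrite !mulmxA VV.
move=> i j.
have e1 : Lf i j *m V = V *m Lf i j *m V.
  by rewrite -{1}[Lf i j]mul1mx -eqU !mulmxDl H1 addr0.
have e2 : V *m Lf i j = V *m Lf i j *m V.
  have := H1 j i; move/(congr1 (@adjmx _ _ _)).
  rewrite !adjM aU aV adjL adj0 mulmxA => H2.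
  by rewrite -{1}[V *m Lf i j]mulmx1 -eqU mulmxDr H2 addr0.
by rewrite e1 -e2.
Qed.

Lemma adjLXL i j X : adjmx (Lf i j *m X *m adjmx (Lf i j)) = Lf i j *m adjmx X *m adjmx (Lf i j).
Proof. by rewrite !adjM adjK mulmxA. Qed.

Lemma adjTf X : adjmx (Tf X) = Tf (adjmx X).
Proof.
rewrite !TfE adj_sum; apply: eq_bigr => i _; rewrite adj_sum; apply: eq_bigr => j _.
exact: adjLXL.
Qed.

Lemma adjHf X : adjmx (Hf X) = Hf (adjmx X).
Proof.
rewrite /Hf adj_sum; apply: eq_bigr => j _; by rewrite !adjM adjK mulmxA.
Qed.

Lemma Tf_pos : positive_map Tf.
Proof.
move=> X [hX pX]; split; first by rewrite /Defs.hermitian adjTf hX.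
move=> v; rewrite TfE mulmx_sumr mulmx_suml summxE; apply: sumr_ge0 => i _.
rewrite mulmx_sumr mulmx_suml summxE; apply: sumr_ge0 => j _.
have := pX (adjmx (Lf i j) *m v); rewrite adjM adjK !mulmxA.
by [].
Qed.

Lemma Tf_sa : selfadjoint_map Tf.
Proof.
move=> X Y; rewrite adjTf !TfE mulmx_suml mulmx_sumr !tr_sum.
under eq_bigr do rewrite mulmx_suml tr_sum.
under [RHS]eq_bigr do rewrite mulmx_sumr tr_sum.
rewrite [RHS]exchange_big /=; apply: eq_bigr => i _; apply: eq_bigr => j _.
rewrite (adjL j i) -(adjL i j) -!mulmxA mxtrace_mulC.
by rewrite !mulmxA.
Qed.

Lemma tr_TH Y : \tr (Tf Y *m adjmx Y) = \tr (Hf Y *m adjmx (Hf Y)).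
Proof.
rewrite adjHf {2}/Hf mulmx_sumr /Tf mulmx_suml !tr_sum; apply: eq_bigr => i _.
by rewrite -!mulmxA mxtrace_mulC !mulmxA.
Qed.

Lemma Tf_eq0 Y : Tf Y = 0 -> Hf Y = 0.
Proof. by move=> H; apply: trAA_eq0; rewrite -tr_TH H mul0mx mxtrace0. Qed.

Definition Qf := forall V, orth_proj V -> comm V ->
  forall X, Hf (V *m X *m (1%:M - V)) = 0.

Lemma commM A B : comm A -> comm B -> comm (A *m B).
Proof. by move=> cA cB i j; rewrite mulmxA (cA i j) -mulmxA (cB i j) mulmxA. Qed.

Lemma comm1 : comm 1%:M.
Proof. by move=> i j; rewrite mulmx1 mul1mx. Qed.

Lemma commB A B : comm A -> comm B -> comm (A - B).
Proof. by move=> cA cB i j; rewrite mulmxBl mulmxBr (cA i j) (cB i j). Qed.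

Lemma comm_adjL A : comm A -> forall i j, adjmx (Lf i j) *m A = A *m adjmx (Lf i j).
Proof. by move=> cA i j; rewrite adjL (cA j i). Qed.

Lemma Lf_sub_proj (W P : 'M[C]_k) : W *m P = P -> P *m W = P ->
  forall X, exists Y, P *m X *m P = W *m Y *m W.
Proof. by move=> h1 h2 X; exists (P *m X *m P); rewrite -{1}h1 -{2}h2 !mulmxA. Qed.

Lemma CR_Qf : completely_reducible Tf -> Qf.
Proof.
move=> [_ [_ [l [W [pW [oW [iW [irW RW]]]]]]]] V pV cV X.
have cW : forall i, comm (W i) by move=> i; exact: inv_comm (pW i) (iW i).
apply: Tf_eq0.
have TX : Tf X = \sum_i W i *m Tf X *m W i.
  have := RW (X - \sum_i W i *m X *m W i) (R_decomp pW oW X).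
  rewrite TfB Tf_sum => /eqP; rewrite subr_eq0 => /eqP E.
  rewrite {1}E; apply: eq_bigr => i _; rewrite Tf_commR; last exact: cW.
  by rewrite Tf_commL; last exact: cW.
have cU : comm (1%:M - V) by apply: commB; [exact: comm1 | exact: cV].
rewrite Tf_commR // Tf_commL // TX mulmx_sumr mulmx_suml big1 // => i _.
have [WW aW] := pW i.
have [VV aV] := pV.
set D := (1%:M - W i) *m V *m W i.
have cD : comm D by apply: commM; [apply: commM; [apply: commB; [exact: comm1|exact: cW]|exact: cV]|exact: cW].
have TD : Tf D = 0 := RW D (R_D pW oW i V).
have LD : forall a b, Lf a b *m D = 0.
  apply: trsum2_eq0.
  suff -> : \sum_a \sum_b Lf a b *m D *m adjmx (Lf a b *m D) = Tf D *m adjmx D.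
    by rewrite TD mul0mx mxtrace0.
  rewrite TfE mulmx_suml; apply: eq_bigr => a _; rewrite mulmx_suml; apply: eq_bigr => b _.
  by rewrite {2}(cD a b) adjM !mulmxA.
case: (eqVneq D 0) => [D0|Dn0].
  have e1 : V *m W i = W i *m V *m W i.
    by apply/eqP; rewrite -subr_eq0 -mulmxBl -{1}[V]mul1mx -mulmxBl -/D D0.
  have e2 : W i *m V = V *m W i.
    have := congr1 (@adjmx _ _ _) e1; rewrite !adjM aW aV mulmxA => ->.
    by rewrite -e1.
  have pP : orth_proj (V *m W i).
    split; first by rewrite mulmxA -(mulmxA V) e2 mulmxA VV -mulmxA WW.
    by rewrite adjM aW aV e2.
  have cP : comm (V *m W i) by apply: commM.
  have h1 : W i *m (V *m W i) = V *m W i by rewrite mulmxA -e1.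
  have h2 : V *m W i *m W i = V *m W i by rewrite -mulmxA WW.
  have [P0|PW] := irW i _ pP (Lf_sub_proj h1 h2) (comm_inv cP).
    by rewrite !mulmxA P0 !mul0mx.
  have WU : W i *m (1%:M - V) = 0 by rewrite mulmxBr mulmx1 e2 PW subrr.
  by rewrite -!mulmxA WU !mulmx0.
have aDn0 : adjmx D != 0.
  apply/eqP => H; move/eqP: Dn0; apply; by rewrite -[D]adjK H adj0.
have [c uc] := col_neq0 aDn0.
set u := col c (adjmx D) in uc.
have Lu : forall a b, Lf a b *m u = 0.
  move=> a b; rewrite /u colE mulmxA.
  suff -> : Lf a b *m adjmx D = 0 by rewrite mul0mx.
  by rewrite -(adjL b a) -adjM -(cD b a) LD adj0.
have Wu : W i *m u = u.
  rewrite /u colE mulmxA; congr (_ *m _).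
  by rewrite /D !adjM aW aV !mulmxA WW.
have pP := rk1_proj uc.
have cP : comm (rk1 u).
  move=> a b; rewrite /rk1 -scalemxAl -scalemxAr !mulmxA Lu mul0mx.
  rewrite -mulmxA -[adjmx u *m Lf a b]adjK adjM adjK adjL Lu adj0 mulmx0.
  by rewrite !scaler0.
have h1 : W i *m rk1 u = rk1 u by rewrite /rk1 -scalemxAr mulmxA Wu.
have h2 : rk1 u *m W i = rk1 u.
  by rewrite /rk1 -scalemxAl -mulmxA -{1}aW -adjM Wu.
have [P0|PW] := irW i _ pP (Lf_sub_proj h1 h2) (comm_inv cP).
  by move: (uc); rewrite -{1}(rk1_u uc) P0 mul0mx eqxx.
have LW : forall a b, Lf a b *m W i = 0.
  by move=> a b; rewrite -PW /rk1 -scalemxAr mulmxA Lu mul0mx scaler0.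
suff -> : W i *m Tf X *m W i = 0 by rewrite mulmx0 mul0mx.
rewrite -Tf_commL; last exact: cW.
rewrite -Tf_commR; last exact: cW.
rewrite TfE big1 // => a _; rewrite big1 // => b _.
by rewrite !mulmxA LW !mul0mx.
Qed.

Lemma Tf_of_Hf Y : Hf Y = 0 -> Tf Y = 0.
Proof. by move=> H; rewrite /Tf H big1 // => i _; rewrite mulmx0 mul0mx. Qed.

Lemma proj_sub_rank (P V : 'M[C]_k) : orth_proj P -> orth_proj V ->
  V *m P = P -> P <> V -> (\rank P < \rank V)%N.
Proof.
move=> [PP aP] [VV aV] VP nPV.
have PV : P *m V = P by rewrite -aP -aV -adjM VP.
have sPV : (P <= V)%MS by rewrite -PV submxMl.
have := mxrank_leqif_sup sPV; rewrite ltn_neqAle => -[-> ->].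
rewrite andbT; apply/negP => /submxP [X VX]; apply: nPV.
by rewrite -VP {1}VX -mulmxA PP -VX.
Qed.

Definition catf T l1 l2 (F1 : 'I_l1 -> T) (F2 : 'I_l2 -> T) (i : 'I_(l1 + l2)) : T :=
  match split i with inl a => F1 a | inr b => F2 b end.

Lemma split_l l1 l2 (a : 'I_l1) : split (lshift l2 a) = inl a.
Proof. exact: (unsplitK (inl _ a)). Qed.
Lemma split_r l1 l2 (b : 'I_l2) : split (rshift l1 b) = inr b.
Proof. exact: (unsplitK (inr _ b)). Qed.

Lemma decomp (V : 'M[C]_k) : orth_proj V -> comm V ->
  exists l (W : 'I_l -> 'M[C]_k), (forall i, orth_proj (W i)) /\
    (forall i j, i != j -> W i *m W j = 0) /\ (forall i, comm (W i)) /\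
    (forall i, irreducible_on Tf (W i)) /\ \sum_i W i = V.
Proof.
have [r] := ubnP (\rank V); elim: r V => // r IH V ltV pV cV.
case: (classic (irreducible_on Tf V)) => [irV|nirV].
  exists 1%N, (fun _ => V); split; first by [].
  split; first by move=> i j; rewrite !ord1 eqxx.
  by split; first by []; split; first by []; rewrite big_ord1.
have [W' [pW' [sW' [iW' [n0 nV]]]]] : exists W', orth_proj W' /\
    (forall X, exists Y, W' *m X *m W' = V *m Y *m V) /\ inv Tf W' /\
    W' <> 0 /\ W' <> V.
  apply: NNPP => H; apply: nirV => W pW sW iW.
  case: (classic (W = 0)) => [->|W0]; first by left.
  right; apply: NNPP => WV; apply: H; exists W; do !split => //.
have [VV aV] := pV; have [WW aW] := pW'.
have VW : V *m W' = W'.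
  have [Y HY] := sW' 1%:M; move: HY; rewrite mulmx1 WW => ->.
  by rewrite !mulmxA VV.
have WV : W' *m V = W' by rewrite -aW -aV -adjM VW.
have cW' := inv_comm pW' iW'.
set V2 := V - W'.
have pV2 : orth_proj V2.
  split; first by rewrite /V2 mulmxBl !mulmxBr VV VW WV WW subrr subr0.
  by rewrite /V2 adjB aV aW.
have cV2 : comm V2 by apply: commB.
have VV2 : V *m V2 = V2 by rewrite /V2 mulmxBr VV VW.
have nV2 : V2 <> V.
  by move=> E; apply: n0; move: (congr1 (fun M => V - M) E); rewrite /V2 /= opprB addrC subrK subrr.
have [l1 [W1 [p1 [o1 [c1 [i1 s1]]]]]] := IH W' (leq_trans (proj_sub_rank pW' pV VW nV) ltV) pW' cW'.
have [l2 [W2 [p2 [o2 [c2 [i2 s2]]]]]] := IH V2 (leq_trans (proj_sub_rank pV2 pV VV2 nV2) ltV) pV2 cV2.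
have e1 : forall a, W1 a *m W' = W1 a.
  move=> a; rewrite -s1 mulmx_sumr (bigD1 a) //= big1 ?addr0; first exact: (p1 a).1.
  by move=> b ba; rewrite o1 // eq_sym.
have e2 : forall b, V2 *m W2 b = W2 b.
  move=> b; rewrite -s2 mulmx_suml (bigD1 b) //= big1 ?addr0; first exact: (p2 b).1.
  by move=> a ab; rewrite o2.
have WV2 : W' *m V2 = 0 by rewrite /V2 mulmxBr WV WW subrr.
have V2W : V2 *m W' = 0 by rewrite /V2 mulmxBl VW WW subrr.
have x12 : forall a b, W1 a *m W2 b = 0.
  by move=> a b; rewrite -e1 -e2 mulmxA -(mulmxA _ W') WV2 mulmx0 mul0mx.
have x21 : forall a b, W2 b *m W1 a = 0.
  move=> a b.
  have -> : W2 b *m W1 a = adjmx (adjmx (W1 a) *m adjmx (W2 b)) by rewrite adjM !adjK.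
  by rewrite (p1 a).2 (p2 b).2 x12 adj0.
exists (l1 + l2)%N, (catf W1 W2); split.
  by move=> i; rewrite /catf; case: (split i).
split.
  move=> i j ij; rewrite /catf.
  case Ei: (split i) => [a|b]; case Ej: (split j) => [a'|b'] //.
  - apply: o1; apply: contraNneq ij => aa'.
    by rewrite -(splitK i) -(splitK j) Ei Ej aa'.
  - apply: o2; apply: contraNneq ij => bb'.
    by rewrite -(splitK i) -(splitK j) Ei Ej bb'.
split; first by move=> i; rewrite /catf; case: (split i).
split; first by move=> i; rewrite /catf; case: (split i).
rewrite big_split_ord /=.
have -> : \sum_i catf W1 W2 (lshift l2 i) = W'.
  by rewrite -s1; apply: eq_bigr => a _; rewrite /catf split_l.
have -> : \sum_i catf W1 W2 (rshift l1 i) = V2.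
  by rewrite -s2; apply: eq_bigr => a _; rewrite /catf split_r.
by rewrite /V2 addrC subrK.
Qed.

Lemma Qf_CR : Qf -> completely_reducible Tf.
Proof.
move=> Q; split; first exact: Tf_sa.
split; first exact: Tf_pos.
have p1 : orth_proj (1%:M : 'M[C]_k) by split; rewrite ?mulmx1 ?adj1.
have [l [W [pW [oW [cW [irW sW]]]]]] := @decomp 1%:M p1 (@comm1).

exists l, W; split; first exact: pW.
split; first exact: oW.
split; first by move=> i; exact: comm_inv.
split; first exact: irW.
move=> X HX.
have WXW : forall i, W i *m X *m W i = 0.
  move=> i; apply: trAA_eq0.
  have := HX (fun j => if j == i then X else 0).
  rewrite (bigD1 i) //= eqxx big1 ?addr0; last first.
    by move=> j /negbTE ->; rewrite mulmx0 mul0mx.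
  have [WW aW] := pW i.
  rewrite !adjM aW mxtrace_mulC => <-.
  have WW' : forall A : 'M_k, A *m W i *m W i = A *m W i by move=> A; rewrite -mulmxA WW.
  rewrite !mulmxA WW' [RHS]mxtrace_mulC !mulmxA.
  by rewrite -!mulmxA [LHS]mxtrace_mulC !mulmxA WW'.
have -> : X = \sum_i \sum_j W i *m X *m W j.
  under eq_bigr do rewrite -mulmx_sumr.
  by rewrite -mulmx_suml -mulmx_suml sW mul1mx mulmx1.
rewrite Tf_sum big1 // => i _; rewrite Tf_sum big1 // => j _.
case: (eqVneq i j) => [<-|ij]; first by rewrite WXW Tf0.
apply: Tf_of_Hf.
have [WW aW] := pW i.
have -> : W i *m X *m W j = W i *m (X *m W j) *m (1%:M - W i).
  by rewrite mulmxBr mulmx1 -!mulmxA oW 1?eq_sym // !mulmx0 subr0.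
by apply: Q; [exact: pW | exact: cW].
Qed.

End Family.

Section Gamma.
Variable R : realType.
Local Notation C := R[i].

Lemma sum_pair (I J : finType) (F : I * J -> C) :
  \sum_(x : I * J) F x = \sum_i \sum_j F (i, j).
Proof. by rewrite pair_bigA; apply: eq_bigr => -[i j]. Qed.

Lemma tr_delta p (a a' : 'I_p) (X : 'M[C]_p) : \tr (delta_mx a a' *m X) = X a' a.
Proof.
rewrite /mxtrace (bigD1 a) //= big1 ?addr0.
  rewrite mxE (bigD1 a') //= big1 ?addr0.
    by rewrite mxE !eqxx mul1r.
  by move=> l la; rewrite mxE eqxx (negbTE la) mul0r.
move=> i ia; rewrite mxE big1 // => l _; by rewrite mxE (negbTE ia) mul0r.
Qed.

Variables (k m : nat).
Local Notation idx := (@mxtens_index k m).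

Lemma G_E (g : 'M[C]_(k * m)) X b b' :
  G_ g X b b' = \sum_a \sum_a' g (idx (a, b)) (idx (a', b')) * X a' a.
Proof.
rewrite /G_ /Gdec /std_dec big_map big_enum /= summxE sum_pair sum_pair.
apply: eq_bigr => a _; apply: eq_bigr => a' _.
rewrite (bigD1 (b, b')) //= big1 ?addr0.
  by rewrite !mxE !eqxx mulr1 -scalemxAl mxtraceZ tr_delta.
move=> [c c'] /= H; rewrite !mxE.
case: (eqVneq c b) => [cb|]; last by move=> _; rewrite mulr0.
case: (eqVneq c' b') => [cb'|]; last by move=> _; rewrite andbF mulr0.
by move: H; rewrite cb cb' eqxx.
Qed.

Lemma F_E (g : 'M[C]_(k * m)) Y a a' :
  F_ g Y a a' = \sum_b \sum_b' g (idx (a, b)) (idx (a', b')) * Y b' b.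
Proof.
rewrite /F_ /Fdec /std_dec big_map big_enum /= summxE sum_pair.
rewrite (bigD1 (a, a')) //= [X in _ + X]big1 ?addr0.
  rewrite sum_pair; apply: eq_bigr => b _; apply: eq_bigr => b' _.
  by rewrite !mxE !eqxx mulr1 tr_delta mulrC.
move=> [c c'] /= H; apply: big1 => q _; rewrite !mxE.
case: (eqVneq c a) => [ca|]; last by move=> _; rewrite mulr0 mulr0.
case: (eqVneq c' a') => [ca'|]; last by move=> _; rewrite andbF mulr0 mulr0.
by move: H; rewrite ca ca' eqxx.
Qed.

Definition C_of n (h : 'I_n -> 'cV[C]_(k * m)) (j : 'I_n) : 'M[C]_(m, k) :=
  \matrix_(b, a) (h j (idx (a, b)) 0)^*.

Lemma gE n (h : 'I_n -> 'cV[C]_(k * m)) p q :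
  (\sum_j h j *m adjmx (h j)) p q = \sum_j h j p 0 * (h j q 0)^*.
Proof.
rewrite summxE; apply: eq_bigr => j _; rewrite mxE big_ord1 adjE //.
Qed.

Lemma Hf_E n (h : 'I_n -> 'cV[C]_(k * m)) X b b' :
  Hf (C_of h) X b b' = G_ (\sum_j h j *m adjmx (h j)) X b' b.
Proof.
rewrite G_E /Hf summxE.
under [RHS]eq_bigr do under eq_bigr do rewrite gE mulr_suml.
under [LHS]eq_bigr do rewrite mxE; under [LHS]eq_bigr do under eq_bigr do rewrite mxE mulr_suml.
rewrite exchange_big /=; apply: eq_bigr => l _.
rewrite exchange_big /=; apply: eq_bigr => c _.
apply: eq_bigr => j _; rewrite adjE !mxE conjCK; ring.
Qed.

Lemma FG_Tf n (h : 'I_n -> 'cV[C]_(k * m)) X :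
  F_ (\sum_j h j *m adjmx (h j)) (G_ (\sum_j h j *m adjmx (h j)) X) = Tf (C_of h) X.
Proof.
apply/matrixP => a a'; rewrite F_E.
under eq_bigr do under eq_bigr do rewrite -Hf_E gE mulr_suml.
rewrite /Tf summxE.
under [RHS]eq_bigr do rewrite mxE; under [RHS]eq_bigr do under eq_bigr do rewrite mxE mulr_suml.
rewrite [LHS]exchange_big /=.
under [LHS]eq_bigr do rewrite exchange_big /=.
rewrite [LHS]exchange_big /=.
apply: eq_bigr => j _; apply: eq_bigr => b' _; apply: eq_bigr => b _.
rewrite adjE !mxE conjCK; ring.
Qed.

Lemma adj_delta p q (i : 'I_p) (j : 'I_q) : adjmx (delta_mx i j : 'M[C]_(p,q)) = delta_mx j i.
Proof. by apply/matrixP => a b; rewrite adjE !mxE rmorph_nat andbC. Qed.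

Lemma psd_factor p (g : 'M[C]_p) : psd g ->
  exists n (h : 'I_n -> 'cV[C]_p), g = \sum_j h j *m adjmx (h j).
Proof.
move=> [hg pg].
have nm : g \is normalmx.
  apply/normalmxP; change (g *m adjmx g = adjmx g *m g); by rewrite hg.
have /orthomx_spectralP gE := nm.
have Pu := spectral_unitarymx g.
set P := spectralmx g in gE Pu; set d := spectral_diag g in gE.
rewrite invmx_unitary // in gE.
have PP : P *m adjmx P = 1%:M by have /unitarymxP := Pu.
change (g = adjmx P *m diag_mx d *m P) in gE.
pose u j := adjmx P *m delta_mx j (0 : 'I_1).
have uu : forall j, u j *m adjmx (u j) = adjmx P *m delta_mx j j *m P.
  move=> j; rewrite /u adjM adjK adj_delta !mulmxA -(mulmxA (adjmx P)).
  by rewrite mul_delta_mx.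
have gsum : g = \sum_j d 0 j *: (u j *m adjmx (u j)).
  rewrite {1}gE diag_mx_sum_delta mulmx_sumr mulmx_suml; apply: eq_bigr => j _.
  by rewrite uu -scalemxAr -scalemxAl.
have d_ge0 : forall j, 0 <= d 0 j.
  move=> j; have := pg (u j).
  suff -> : (adjmx (u j) *m g *m u j) 0 0 = d 0 j by [].
  rewrite gE /u adjM adjK adj_delta !mulmxA -(mulmxA _ P (adjmx P)) PP mulmx1.
  rewrite -(mulmxA _ P (adjmx P)) PP mulmx1.
  rewrite diag_mx_sum_delta mulmx_sumr mulmx_suml summxE (bigD1 j) //= big1 ?addr0.
    by rewrite -scalemxAr -scalemxAl !mul_delta_mx !mxE !eqxx mulr1.
  move=> i ij; rewrite -scalemxAr -scalemxAl !mul_delta_mx_cond eq_sym (negbTE ij).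
  by rewrite mulr0n mul0mx scaler0 mxE.
exists p, (fun j => sqrtC (d 0 j) *: u j).
rewrite {1}gsum; apply: eq_bigr => j _; rewrite adjZ -scalemxAl -scalemxAr scalerA.
by rewrite geC0_conj ?sqrtC_ge0 // -expr2 sqrtCK.
Qed.

Lemma sum_idx (F : 'I_(k * m) -> C) : \sum_p F p = \sum_a \sum_b F (idx (a, b)).
Proof.
rewrite (reindex (@mxtens_index k m)) /=; last first.
  by exists (@mxtens_unindex k m) => p _; rewrite (mxtens_indexK, mxtens_unindexK).
exact: sum_pair (fun ab => F (idx ab)).
Qed.

Lemma vec_neq0 p (v : 'cV[C]_p) : v != 0 -> exists i, v i 0 != 0.
Proof.
move=> nv; apply/existsP; apply: contraR nv => /existsPn H; apply/eqP/matrixP => i j.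
by rewrite ord1 mxE; apply/eqP; have := H i; rewrite negbK.
Qed.

Lemma KL n (h : 'I_n -> 'cV[C]_(k * m)) (x : 'cV[C]_k) (w : 'cV[C]_m) :
  posdef (\sum_j h j *m adjmx (h j)) -> x != 0 -> w != 0 ->
  exists j, (adjmx w *m C_of h j *m x) 0 0 != 0.
Proof.
move=> [_ pd] nx nw; apply: NNPP => H.
have H0 : forall j, (adjmx w *m C_of h j *m x) 0 0 = 0.
  by move=> j; apply: NNPP => nz; apply: H; exists j; apply/eqP.
pose z : 'cV[C]_(k * m) := \col_p ((w (mxtens_unindex p).2 0)^* * x (mxtens_unindex p).1 0).
have zE : forall a b, z (idx (a, b)) 0 = (w b 0)^* * x a 0.
  by move=> a b; rewrite /z mxE mxtens_indexK.
have [a0 xa0] := vec_neq0 nx; have [b0 wb0] := vec_neq0 nw.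
have nz : z != 0.
  apply/eqP => /matrixP /(_ (idx (a0, b0)) 0); rewrite zE mxE => /eqP.
  by rewrite mulf_eq0 conjC_eq0 (negbTE xa0) (negbTE wb0).
clearbody z.
have zh : forall j, (adjmx (h j) *m z) 0 0 = (adjmx w *m C_of h j *m x) 0 0.
  move=> j; rewrite mxE sum_idx mxE.
  under [RHS]eq_bigr do rewrite mxE mulr_suml.
  apply: eq_bigr => a _; apply: eq_bigr => b _.
  rewrite adjE zE adjE !mxE; ring.
have := pd z nz; rewrite mulmx_sumr mulmx_suml summxE big1 ?ltxx //.
move=> j _; rewrite !mulmxA -(mulmxA _ (adjmx (h j))) mxE big_ord1.
by rewrite zh H0 mulr0.
Qed.

Lemma posdef_Qf n (h : 'I_n -> 'cV[C]_(k * m)) :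
  posdef (\sum_j h j *m adjmx (h j)) -> Qf (C_of h).
Proof.
move=> pd V [VV aV] cV X.
case: (posnP m) => [m0|m_gt0].
  by apply/matrixP => i; move: (ltn_ord i); rewrite {2}m0.
case: (eqVneq V 0) => [->|V0]; first by rewrite !mul0mx Hf0.
case: (eqVneq V 1%:M) => [->|V1]; first by rewrite subrr mulmx0 Hf0.
exfalso.
have [c xc] := col_neq0 V0; set x := col c V in xc.
have V1' : 1%:M - V != 0 by rewrite subr_eq0 eq_sym.
have [c' yc] := col_neq0 V1'.
set y := col c' (1%:M - V) in yc.
have Vx : V *m x = x by rewrite /x !colE mulmxA VV.
have Vy : V *m y = 0 by rewrite /y colE mulmxA mulmxBr mulmx1 VV subrr mul0mx.
pose w0 : 'cV[C]_m := delta_mx (Ordinal m_gt0) 0.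
have nw0 : w0 != 0.
  apply/eqP => /matrixP /(_ (Ordinal m_gt0) 0); rewrite !mxE !eqxx /= => /eqP.
  by rewrite oner_eq0.
have [i Hi] := KL pd yc nw0.
have nw : C_of h i *m y != 0.
  by apply: contraNneq Hi => e; rewrite -mulmxA e mulmx0 mxE.
have [j Hj] := KL pd xc nw.
move: Hj; rewrite adjM -!mulmxA (mulmxA (adjmx (C_of h i))) -LfE.
rewrite -Vx (mulmxA (Lf (C_of h) i j)) (cV i j) -(mulmxA V) (mulmxA (adjmx y)).
have -> : adjmx y *m V = 0 by rewrite -aV -adjM Vy adj0.
by rewrite !mul0mx mxE eqxx.
Qed.

End Gamma.

Section Ops.
Variable R : realType.
Local Notation C := R[i].
Variables (k m : nat).

Lemma Hf_cat n1 n2 (C1 : 'I_n1 -> 'M[C]_(m,k)) (C2 : 'I_n2 -> 'M[C]_(m,k)) Y :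
  Hf (catf C1 C2) Y = Hf C1 Y + Hf C2 Y.
Proof. by rewrite /Hf big_split_ord /catf; congr (_ + _); apply: eq_bigr => j _; rewrite ?split_l ?split_r. Qed.

Lemma Qf_cat n1 n2 (C1 : 'I_n1 -> 'M[C]_(m,k)) (C2 : 'I_n2 -> 'M[C]_(m,k)) :
  Qf C1 -> Qf C2 -> Qf (catf C1 C2).
Proof.
move=> Q1 Q2 V pV cV X.
have c1 : comm C1 V.
  move=> a b; have E : Lf (catf C1 C2) (lshift n2 a) (lshift n2 b) = Lf C1 a b.
    by rewrite !LfE /catf !split_l.
  by rewrite -E; exact: cV.
have c2 : comm C2 V.
  move=> a b; have E : Lf (catf C1 C2) (rshift n1 a) (rshift n1 b) = Lf C2 a b.
    by rewrite !LfE /catf !split_r.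
  by rewrite -E; exact: cV.
by rewrite Hf_cat Q1 // Q2 // addr0.
Qed.

Lemma Qf_scale n (Cf : 'I_n -> 'M[C]_(m,k)) t : t != 0 ->
  Qf Cf -> Qf (fun j => t *: Cf j).
Proof.
move=> t0 Q V pV cV X.
have tt0 : t^* * t != 0 by rewrite mulf_neq0 // conjC_eq0.
have c1 : comm Cf V.
  move=> a b; have := cV a b; rewrite !LfE adjZ -!scalemxAl -!scalemxAr !scalerA -scalemxAl scalerA.
  by move/(congr1 (fun M => (t^* * t)^-1 *: M)); rewrite !scalerA mulVf // !scale1r.
have -> : Hf (fun j => t *: Cf j) (V *m X *m (1%:M - V)) = (t * t^*) *: Hf Cf (V *m X *m (1%:M - V)).
  rewrite /Hf scaler_sumr; apply: eq_bigr => j _.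
  by rewrite adjZ -!scalemxAl -scalemxAr scalerA.
by rewrite Q // scaler0.
Qed.

Lemma C_of_cat n1 n2 (h1 : 'I_n1 -> 'cV[C]_(k * m)) (h2 : 'I_n2 -> 'cV[C]_(k * m)) :
  C_of (catf h1 h2) = catf (C_of h1) (C_of h2).
Proof.
apply: functional_extensionality => j.
by rewrite /C_of /catf; case: (split j).
Qed.

Lemma sum_cat n1 n2 (h1 : 'I_n1 -> 'cV[C]_(k * m)) (h2 : 'I_n2 -> 'cV[C]_(k * m)) :
  \sum_j catf h1 h2 j *m adjmx (catf h1 h2 j) =
  \sum_j h1 j *m adjmx (h1 j) + \sum_j h2 j *m adjmx (h2 j).
Proof. by rewrite big_split_ord /catf; congr (_ + _); apply: eq_bigr => j _; rewrite ?split_l ?split_r. Qed.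

Lemma C_of_scale n (h : 'I_n -> 'cV[C]_(k * m)) s :
  C_of (fun j => s *: h j) = fun j => s^* *: C_of h j.
Proof.
apply: functional_extensionality => j; apply/matrixP => b a.
by rewrite !mxE rmorphM.
Qed.

End Ops.

Section Final.
Variable R : realType.
Local Notation C := R[i].
Variables (k m : nat).

Lemma FG_fun n (h : 'I_n -> 'cV[C]_(k * m)) :
  (F_ (\sum_j h j *m adjmx (h j)) \o G_ (\sum_j h j *m adjmx (h j))) = Tf (C_of h).
Proof. by apply: functional_extensionality => X /=; rewrite FG_Tf. Qed.

Lemma psd_hh n (h : 'I_n -> 'cV[C]_(k * m)) : psd (\sum_j h j *m adjmx (h j)).
Proof.
split.
  rewrite /Defs.hermitian adj_sum; apply: eq_bigr => j _; by rewrite adjM adjK.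
move=> v; rewrite mulmx_sumr mulmx_suml summxE; apply: sumr_ge0 => j _.
have -> : adjmx v *m (h j *m adjmx (h j)) *m v =
          (adjmx v *m h j) *m adjmx (adjmx v *m h j) by rewrite adjM adjK !mulmxA.
by rewrite -trace_mx11 trAA_ge0.
Qed.

Lemma CR_Qf_g n (h : 'I_n -> 'cV[C]_(k * m)) :
  CR (\sum_j h j *m adjmx (h j)) -> Qf (C_of h).
Proof. by move=> [_ cr]; apply: CR_Qf; rewrite -FG_fun. Qed.

Lemma Qf_CR_g n (h : 'I_n -> 'cV[C]_(k * m)) :
  Qf (C_of h) -> CR (\sum_j h j *m adjmx (h j)).
Proof. move=> Q; split; first exact: psd_hh. by rewrite FG_fun; apply: Qf_CR. Qed.

Lemma posdef_psd p (g : 'M[C]_p) : posdef g -> psd g.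
Proof.
move=> [hg pd]; split => // v; case: (eqVneq v 0) => [->|nv].
  by rewrite mulmx0 mxE.
exact: ltW (pd v nv).
Qed.

Lemma posdef_CR (g : 'M[C]_(k * m)) : posdef g -> CR g.
Proof.
move=> pd; have [n [h gE]] := psd_factor (posdef_psd pd).
by rewrite gE; apply: Qf_CR_g; apply: posdef_Qf; rewrite -gE.
Qed.

Lemma CR_scale (g : 'M[C]_(k * m)) c : CR g -> 0 < c -> CR (c *: g).
Proof.
move=> crg c0; have [n [h gE]] := psd_factor crg.1.
have Q := CR_Qf_g (eq_ind _ (fun x => CR x) crg _ gE).
set s := sqrtC c.
have s_ge0 : 0 <= s by rewrite sqrtC_ge0 ltW.
have s0 : s^* != 0.
  by rewrite geC0_conj // sqrtC_eq0; apply: lt0r_neq0.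
have -> : c *: g = \sum_j (s *: h j) *m adjmx (s *: h j).
  rewrite gE scaler_sumr; apply: eq_bigr => j _.
  rewrite adjZ -scalemxAl -scalemxAr scalerA geC0_conj // -expr2 sqrtCK //.
apply: Qf_CR_g; rewrite C_of_scale; exact: Qf_scale.
Qed.

Lemma CR_add (g d : 'M[C]_(k * m)) : CR g -> CR d -> CR (g + d).
Proof.
move=> crg crd.
have [n1 [h1 gE]] := psd_factor crg.1; have [n2 [h2 dE]] := psd_factor crd.1.
have Q1 := CR_Qf_g (eq_ind _ (fun x => CR x) crg _ gE).
have Q2 := CR_Qf_g (eq_ind _ (fun x => CR x) crd _ dE).
rewrite gE dE -sum_cat; apply: Qf_CR_g; rewrite C_of_cat; exact: Qf_cat.
Qed.

Lemma posdef_shift p (r : 'M[C]_p) t : psd r -> 0 < t -> posdef (r + t *: 1%:M).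
Proof.
move=> [hr pr] t0; split.
  by rewrite /Defs.hermitian adjD adjZ adj1 hr geC0_conj // ltW.
move=> v nv.
have -> : (adjmx v *m (r + t *: 1%:M) *m v) 0 0 = (adjmx v *m r *m v) 0 0 + t * vnorm v.
  by rewrite mulmxDr mulmxDl -scalemxAr mulmx1 -scalemxAl /vnorm !mxE.
apply: ltr_wpDl; first exact: pr.
apply: mulr_gt0 => //; rewrite lt0r; apply/andP; split; last exact: vnorm_ge0.
by apply/eqP => /vnorm_eq0 /eqP; rewrite (negbTE nv).
Qed.

Lemma approx (r : 'M[C]_(k * m)) e : state r -> 0 < e ->
  exists g, CR g /\ forall a b, `|g a b - r a b| < e.
Proof.
move=> sr e0; have e20 : 0 < e / 2 by rewrite divr_gt0.
exists (r + (e / 2) *: 1%:M); split; first exact/posdef_CR/posdef_shift.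
move=> a b; rewrite !mxE addrAC subrr add0r.
case: (a == b); rewrite ?mulr1n ?mulr0n ?mulr1 ?mulr0 ?normr0 //.
rewrite ger0_norm ?ltW // ltr_pdivrMr // ltr_pMr //.
by rewrite [X in _ < X](_ : 2 = 1 + 1) // ltrDl.
Qed.

Lemma notclosed : (2 <= k)%N -> (2 <= m)%N ->
  exists r : 'M[C]_(k * m),
    (forall e : C, 0 < e -> exists g, CR g /\ forall a b, `|g a b - r a b| < e) /\ ~ CR r.
Proof.
move=> k2 m2.
have k0 : (0 < k)%N by apply: leq_trans k2.
have m0 : (0 < m)%N by apply: leq_trans m2.
pose i0 : 'I_k := Ordinal k0; pose i1 : 'I_k := Ordinal k2.
pose j0 : 'I_m := Ordinal m0; pose j1 : 'I_m := Ordinal m2.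
have i01 : (i0 == i1) = false by [].
have i10 : (i1 == i0) = false by [].
have j01 : (j0 == j1) = false by [].
have j10 : (j1 == j0) = false by [].
pose h0 : 'cV[C]_(k * m) :=
  delta_mx (mxtens_index (i0, j0)) 0 + delta_mx (mxtens_index (i1, j1)) 0.
pose h := fun _ : 'I_1 => h0.
exists (\sum_j h j *m adjmx (h j)); split.
  by move=> e e0; apply: approx => //; exact: psd_hh.
move=> /CR_Qf_g Q.
set Cc : 'M[C]_(m, k) := delta_mx j0 i0 + delta_mx j1 i1.
have Ch : forall j, C_of h j = Cc.
  move=> j; apply/matrixP => b a; rewrite /Cc /C_of /h /h0 !mxE.
  rewrite !(inj_eq (can_inj (@mxtens_indexK k m))) !xpair_eqE !eqxx !andbT.
  by rewrite rmorphD !rmorph_nat [(b == j0) && _]andbC [(b == j1) && _]andbC.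
have aC : adjmx Cc = delta_mx i0 j0 + delta_mx i1 j1 by rewrite adjD !adj_delta.
have LE : forall i j, Lf (C_of h) i j = delta_mx i0 i0 + delta_mx i1 i1.
  move=> i j; rewrite LfE !Ch aC /Cc !(mulmxDl, mulmxDr) !mul_delta_mx_cond.
  by rewrite !eqxx j01 j10 !mulr0n !mulr1n addr0 add0r.
set V : 'M[C]_k := delta_mx i0 i0.
have pV : orth_proj V by split; rewrite /V ?mul_delta_mx ?adj_delta.
have cV : comm (C_of h) V.
  move=> i j; rewrite LE /V !(mulmxDl, mulmxDr) !mul_delta_mx_cond.
  by rewrite !eqxx i01 i10 !mulr0n !mulr1n !addr0.
have := Q V pV cV (delta_mx i0 i1).
have -> : V *m delta_mx i0 i1 *m (1%:M - V) = delta_mx i0 i1.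
  rewrite /V mul_delta_mx mulmxBr mulmx1 mul_delta_mx_cond i10 mulr0n subr0 //.
rewrite /Hf big_ord1 Ch aC /Cc !(mulmxDl, mulmxDr) !mul_delta_mx_cond.
rewrite !eqxx i10 !mulr0n !mulr1n !mul0mx !addr0 !add0r.
by move/matrixP/(_ j0 j1); rewrite !mxE !eqxx /= => /eqP; rewrite oner_eq0.
Qed.

End Final.

Theorem mainTheorem7 (R : realType) (k m : nat) :
  (* every positive definite matrix of M_k (x) M_m lies in CR_{k,m} *)
  (forall g : 'M[R[i]]_(k * m), posdef g -> CR g) /\
  (* CR_{k,m} is a convex cone *)
  (forall (g : 'M[R[i]]_(k * m)) (c : R[i]), CR g -> 0 < c -> CR (c *: g)) /\
  (forall g d : 'M[R[i]]_(k * m), CR g -> CR d -> CR (g + d)) /\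
  (* CR_{k,m} is dense in the set of states (entrywise distance) *)
  (forall (r : 'M[R[i]]_(k * m)) (e : R[i]), state r -> 0 < e ->
     exists g, CR g /\ forall a b, `|g a b - r a b| < e) /\
  (* CR_{k,m} is not closed (for k, m >= 2) *)
  ((2 <= k)%N -> (2 <= m)%N ->
     exists r : 'M[R[i]]_(k * m),
       (forall e : R[i], 0 < e -> exists g, CR g /\ forall a b, `|g a b - r a b| < e)
       /\ ~ CR r).
Proof.
split; first by move=> g; exact: posdef_CR.
split; first by move=> g c; exact: CR_scale.
split; first by move=> g d; exact: CR_add.
split; first by move=> r e; exact: approx.
exact: notclosed.
Qed.
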